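(* Consider the two-type Bellman–Harris process described in the context. Let $H(t),k_1(t),k_2(t)$ be nonnegative functions on $[0,\infty)$ with $\lim_{t\to\infty}k_i(t)=0$ ($i=1,2$) and $\lim_{t\to\infty}H(t)=\infty$. (a) If there exist functions $k_i(t,\lambda_i)$, $i=1,2$, with $k_i(t,\lambda_i)\sim\lambda_ik_i(t)$ as $t\to\infty$ for every fixed $\lambda_i>0$, and $$\lim_{t\to\infty}H(t)\mathbf{Q}(t;1-k_1(t,\lambda_1),1-k_2(t,\lambda_2))=\mathbf{h}(\lambda_1,\lambda_2),\quad\lambda_1,\lambda_2>0,$$ for a function $\mathbf{h}=(h_1,h_2)$ with components continuous in both arguments, then $$\lim_{t\to\infty}H(t)\mathbf{Q}(t;e^{-\lambda_1k_1(t)},e^{-\lambda_2k_2(t)})=\mathbf{h}(\lambda_1,\lambda_2),\quad\lambda_1,\lambda_2>0.$$ (b) If $\lim_{t\to\infty}H(t)\mathbf{Q}(t;1,1-k_2(t,\lambda_2))=\mathbf{h}(\lambda_2)$ for $\lambda_2>0$, for a function $\mathbf{h}(\lambda_2)=(h_1(\lambda_2),h_2(\lambda_2))$ with continuous components (and $k_2(t,\lambda_2)\sim\lambda_2k_2(t)$ for each fixed $\lambda_2>0$), then $\lim_{t\to\infty}H(t)\mathbf{Q}(t;1,e^{-\lambda_2k_2(t)})=\mathbf{h}(\lambda_2)$ for $\lambda_2>0$.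
   Context: Two-type Bellman–Harris branching process $\mathbf{Z}(t)=(Z_1(t),Z_2(t))$ (particles of type $i\in\{1,2\}$ have life-length distribution $G_i$ and offspring generating function $f_i(s_1,s_2)$, and evolve independently). For $\mathbf{s}=(s_1,s_2)\in[0,1]^2$, $F_i(t;\mathbf{s})=\mathbf{E}[s_1^{Z_1(t)}s_2^{Z_2(t)}\mid\text{one initial particle of type }i]$ and $\mathbf{Q}(t;\mathbf{s})=(1-F_1(t;\mathbf{s}),1-F_2(t;\mathbf{s}))^\dagger$. *)

(* Defs.v *)
From HB Require Import structures.
From mathcomp Require Import all_boot all_order all_algebra.
From mathcomp Require Import all_classical all_reals all_analysis.
Set Implicit Arguments. Unset Strict Implicit. Unset Printing Implicit Defensive.
Import Order.TTheory GRing.Theory Num.Theory.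
Import numFieldNormedType.Exports.
Local Open Scope classical_set_scope.
Local Open Scope ring_scope.

Definition pgf2 {R : realType} (q : nat -> nat -> R) (s1 s2 : R) : R :=
  limn (fun N => \sum_(n < N) \sum_(m < N) q n m * s1 ^+ n * s2 ^+ m).

Definition pmf2 {R : realType} (q : nat -> nat -> R) : Prop :=
  (forall n m, 0 <= q n m) /\
  (fun N => \sum_(n < N) \sum_(m < N) q n m) @ \oo --> (1 : R).

(* q is a sub-probability mass function on nat x nat (total mass <= 1;
   a defect accounts for a possibly infinite population). *)
Definition subpmf2 {R : realType} (q : nat -> nat -> R) : Prop :=
  (forall n m, 0 <= q n m) /\
  (forall N, \sum_(n < N) \sum_(m < N) q n m <= 1).

(* Data of a two-type Bellman-Harris process (types 0,1 stand for 1,2):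
   G i   : life-length distribution of a type-i particle (on [0,oo)),
   q i   : offspring distribution of a type-i particle,
           f_i(s1,s2) = pgf2 (q i) s1 s2,
   p i t : law of (Z_1(t), Z_2(t)) started from one type-i particle,
           F_i(t;s1,s2) = pgf2 (p i t) s1 s2.
   The process is characterised by the Bellman-Harris integral equations
   F_i(t;s) = s_i (1 - G_i(t)) + int_[0,t] f_i(F(t-u;s)) dG_i(u). *)
Definition bellman_harris2 {R : realType}
  (G : 'I_2 -> probability R R) (q : 'I_2 -> nat -> nat -> R)
  (p : 'I_2 -> R -> nat -> nat -> R) : Prop :=
  (forall i, G i [set x : R | x < 0] = 0%E) /\
  (forall i, pmf2 (q i)) /\
  (forall i t, 0 <= t -> subpmf2 (p i t)) /\
  (forall i s1 s2, measurable_fun setT (fun t => pgf2 (p i t) s1 s2)) /\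
  (forall i t s1 s2, 0 <= t -> 0 <= s1 <= 1 -> 0 <= s2 <= 1 ->
     pgf2 (p i t) s1 s2 =
       (if i == ord0 then s1 else s2) * fine (G i [set x : R | t < x])
       + Rintegral (G i) [set u : R | 0 <= u <= t]
           (fun u => pgf2 (q i) (pgf2 (p ord0 (t - u)) s1 s2)
                                (pgf2 (p (lift ord0 ord0) (t - u)) s1 s2))).

Definition BH_Q {R : realType} (p : 'I_2 -> R -> nat -> nat -> R)
  (i : 'I_2) (t s1 s2 : R) : R := 1 - pgf2 (p i t) s1 s2.

Definition equiv_pinfty {R : realType} (f g : R -> R) : Prop :=
  forall eps : R, 0 < eps -> \forall t \near +oo, `|f t - g t| <= eps * `|g t|.

(* Main.v *)
Require Import Defs.
From HB Require Import structures.
From mathcomp Require Import all_boot all_order all_algebra.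
From mathcomp Require Import all_classical all_reals all_analysis.
From mathcomp Require Import ring lra.
Import Order.TTheory GRing.Theory Num.Theory.
Import numFieldNormedType.Exports.
Local Open Scope classical_set_scope.
Local Open Scope ring_scope.
Section Pgf.
Variable R : realType.

Definition psum (q : nat -> nat -> R) (s1 s2 : R) N :=
  \sum_(n < N) \sum_(m < N) q n m * s1 ^+ n * s2 ^+ m.

Lemma psum_nd q s1 s2 : (forall n m, 0 <= q n m) -> 0 <= s1 -> 0 <= s2 ->
  {homo psum q s1 s2 : n m / (n <= m)%N >-> n <= m}.
Proof.
move=> q0 h1 h2; apply/nondecreasing_seqP => N; rewrite /psum.
rewrite big_ord_recr /=.
have t0 : forall n m, 0 <= q n m * s1 ^+ n * s2 ^+ m.
  by move=> n m; rewrite !mulr_ge0 // exprn_ge0.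
apply: ler_wpDr; first by apply: sumr_ge0 => i _; exact: t0.
apply: ler_sum => i _; rewrite big_ord_recr /= lerDl; exact: t0.
Qed.

Lemma psum_le q s1 s2 s1' s2' N : (forall n m, 0 <= q n m) -> 0 <= s1 <= s1' -> 0 <= s2 <= s2' ->
  psum q s1 s2 N <= psum q s1' s2' N.
Proof.
move=> q0 /andP[h1 h1'] /andP[h2 h2']; apply: ler_sum => n _; apply: ler_sum => m _.
have e1 : s1 ^+ n <= s1' ^+ n by apply: lerXn2r; rewrite // nnegrE (le_trans h1 h1').
have e2 : s2 ^+ m <= s2' ^+ m by apply: lerXn2r; rewrite // nnegrE (le_trans h2 h2').
apply: ler_pM; rewrite ?exprn_ge0 ?mulr_ge0 //; first exact: exprn_ge0.
by apply: ler_wpM2l.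
Qed.

Lemma psum_le1 q s1 s2 N : subpmf2 q -> 0 <= s1 <= 1 -> 0 <= s2 <= 1 ->
  psum q s1 s2 N <= 1.
Proof.
move=> [q0 qs] /andP[h1 h1'] /andP[h2 h2']; apply: le_trans (qs N).
apply: ler_sum => n _; apply: ler_sum => m _.
rewrite -mulrA; apply: ler_piMr; rewrite ?mulr_ge0 ?exprn_ge0 // mulr_ile1 ?exprn_ge0 ?exprn_ile1 //.
Qed.

Lemma psum_cvg q s1 s2 : subpmf2 q -> 0 <= s1 <= 1 -> 0 <= s2 <= 1 ->
  cvgn (psum q s1 s2).
Proof.
move=> hq h1 h2; have [q0 _] := hq.
apply: nondecreasing_is_cvgn.
  by apply: psum_nd => //; [case/andP: h1|case/andP: h2].
by exists 1 => _ [N _ <-]; apply: psum_le1.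
Qed.

Lemma pgf2_le (q : nat -> nat -> R) (s1 s2 s1' s2' : R) : subpmf2 q -> 0 <= s1 <= s1' -> s1' <= 1 ->
  0 <= s2 <= s2' -> s2' <= 1 ->
  pgf2 q s1 s2 <= pgf2 q s1' s2'.
Proof.
move=> hq h1 h1' h2 h2'; have [q0 _] := hq.
have r1 : 0 <= s1' <= 1 by case/andP: h1 => a b; rewrite h1' (le_trans a b).
have r2 : 0 <= s2' <= 1 by case/andP: h2 => a b; rewrite h2' (le_trans a b).
have r1' : 0 <= s1 <= 1 by case/andP: h1 => a b; rewrite a (le_trans b h1').
have r2' : 0 <= s2 <= 1 by case/andP: h2 => a b; rewrite a (le_trans b h2').
rewrite /pgf2 -/(psum q s1 s2) -/(psum q s1' s2'); apply: ler_lim.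
- exact: psum_cvg.
- exact: psum_cvg.
- by apply: nearW => N; apply: psum_le.
Qed.
End Pgf.
Section Asym.
Variable R : realType.
Implicit Types (k kl : R -> R).

Lemma equiv_bounds k kl (a c : R) : 0 < a -> 0 < c ->
  (\forall t \near +oo, 0 <= k t) -> equiv_pinfty kl (fun t => a * k t) ->
  \forall t \near +oo, (a - c) * k t <= kl t <= (a + c) * k t.
Proof.
move=> a0 c0 hk E.
have := E (c / a) (divr_gt0 c0 a0).
apply: filterS2 hk => t k0.
have akn : `|a * k t| = a * k t by rewrite ger0_norm // mulr_ge0 // ltW.
rewrite akn.
have -> : c / a * (a * k t) = c * k t by field; rewrite lt0r_neq0.
rewrite ler_norml => /andP[u v]; apply/andP; split; lra.
Qed.

Lemma upper_pt k kl (a l : R) : 0 < l < a ->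
  (\forall t \near +oo, 0 <= k t) -> k x @[x --> +oo] --> 0 ->
  equiv_pinfty kl (fun t => a * k t) ->
  \forall t \near +oo, 0 <= 1 - kl t <= 1 /\ 1 - kl t <= expR (- (l * k t)).
Proof.
move=> /andP[l0 la] hk k0 E.
have a0 : 0 < a by exact: lt_trans l0 la.
have al0 : 0 < a - l by rewrite subr_gt0.
have B := @equiv_bounds k kl a (a - l) a0 al0 hk E.
have S : \forall t \near +oo, k t < (2 * a)^-1.
  by apply: (cvgr_lt 0 k0); rewrite invr_gt0 mulr_gt0.
near=> t.
have /andP[b1 b2] : (a - (a - l)) * k t <= kl t <= (a + (a - l)) * k t by near: t.
have kt0 : 0 <= k t by near: t.
have kt1 : k t < (2 * a)^-1 by near: t.
have kt2 : 2 * a * k t < 1.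
  have i1 : 2 * a * (2 * a)^-1 = 1 by rewrite mulfV // gt_eqF // mulr_gt0.
  nra.
have e := expR_ge1Dx (- (l * k t)).
split; first (apply/andP; split); nra.
Unshelve. all: by end_near.
Qed.

Lemma lower_pt k kl (b l : R) : 0 < b < l ->
  (\forall t \near +oo, 0 <= k t) -> k x @[x --> +oo] --> 0 ->
  equiv_pinfty kl (fun t => b * k t) ->
  \forall t \near +oo, 0 <= 1 - kl t <= 1 /\ expR (- (l * k t)) <= 1 - kl t.
Proof.
move=> /andP[b0 bl] hk k0 E.
have l0 : 0 < l by exact: lt_trans b0 bl.
have b20 : 0 < b / 2 by rewrite divr_gt0.
have B1 := @equiv_bounds k kl b (b / 2) b0 b20 hk E.
have c0 : 0 < (l - b) / 2 by rewrite divr_gt0 // subr_gt0.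
have B2 := @equiv_bounds k kl b _ b0 c0 hk E.
set m := b + (l - b) / 2.
have m0 : 0 < m by rewrite addr_gt0.
have ml : m < l by rewrite /m; lra.
have S : \forall t \near +oo, k t < (l - m) / (l * m).
  by apply: (cvgr_lt 0 k0); rewrite divr_gt0 ?mulr_gt0 // subr_gt0.
have S2 : \forall t \near +oo, k t < (2 * b)^-1.
  by apply: (cvgr_lt 0 k0); rewrite invr_gt0 mulr_gt0.
near=> t.
have /andP[b1 _] : (b - b / 2) * k t <= kl t <= (b + b / 2) * k t by near: t.
have /andP[_ b2] : (b - (l - b) / 2) * k t <= kl t <= (b + (l - b) / 2) * k t by near: t.
have kt0 : 0 <= k t by near: t.
have kt1 : k t < (l - m) / (l * m) by near: t.
have kt1' : l * m * k t <= l - m.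
  have i1 : l * m * ((l - m) / (l * m)) = l - m by field; rewrite ?gt_eqF.
  nra.
have kt2 : k t < (2 * b)^-1 by near: t.
have kt3 : 2 * b * k t < 1.
  have i1 : 2 * b * (2 * b)^-1 = 1 by rewrite mulfV // gt_eqF // mulr_gt0.
  nra.
have e := expR_ge1Dx (l * k t).
have E0 := expR_gt0 (l * k t).
have Ei : expR (- (l * k t)) * expR (l * k t) = 1 by rewrite expRN mulVf // gt_eqF.
have En := expR_gt0 (- (l * k t)).
have lk0 : 0 <= l * k t by rewrite mulr_ge0 // ltW.
have P : expR (- (l * k t)) * (1 + l * k t) <= 1.
  nra.
have Q : 1 <= (1 + l * k t) * (1 - m * k t).
  rewrite /m in kt1' *; nra.
have mk1 : m * k t <= 1 by nra.
have kl0 : 0 <= kl t by apply: le_trans b1; rewrite mulr_ge0 //; lra.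
rewrite /m in mk1.
split; first (apply/andP; split; lra).
rewrite /m in Q P b2 *; nra.
Unshelve. all: by end_near.
Qed.
End Asym.
Section Sq.
Variable R : realType.

Lemma squeeze (f : R -> R) (L : R) :
  (forall e, 0 < e -> exists (g1 g2 : R -> R) (L1 L2 : R),
     [/\ g1 t @[t --> +oo] --> L1, g2 t @[t --> +oo] --> L2, L - e <= L1, L2 <= L + e
       & \forall t \near +oo, g1 t <= f t <= g2 t]) ->
  f t @[t --> +oo] --> L.
Proof.
move=> Hs; apply/cvgrPdist_le => e e0.
have e20 : 0 < e / 2 by rewrite divr_gt0.
have [g1 [g2 [L1 [L2 [c1 c2 h1 h2 hn]]]]] := Hs _ e20.
have n1 : \forall t \near +oo, L1 - e / 2 < g1 t by apply: (cvgr_gt L1 c1); lra.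
have n2 : \forall t \near +oo, g2 t < L2 + e / 2 by apply: (cvgr_lt L2 c2); lra.
near=> t.
have /andP[u v] : g1 t <= f t <= g2 t by near: t.
have w1 : L1 - e / 2 < g1 t by near: t.
have w2 : g2 t < L2 + e / 2 by near: t.
rewrite ler_norml; apply/andP; split; lra.
Unshelve. all: by end_near.
Qed.

Lemma near_pts (P : R -> Prop) (x : R) : 0 < x -> (\forall y \near x, P y) ->
  (exists y, x < y /\ P y) /\ (exists y, 0 < y < x /\ P y).
Proof.
move=> x0 /nbhs_ballP[d /= d0 Hd].
have Hb : forall y, `|x - y| < d -> P y.
  by move=> y hy; apply: Hd; rewrite -ball_normE /ball_ /=.
split.
  exists (x + d / 2); split; first lra.
  by apply: Hb; rewrite opprD addrA subrr sub0r normrN ger0_norm; lra.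
have [dx|xd] := leP d x.
  exists (x - d / 2); split; first (apply/andP; split; lra).
  by apply: Hb; rewrite opprB addrC subrK ger0_norm; lra.
exists (x / 2); split; first (apply/andP; split; lra).
by apply: Hb; rewrite ger0_norm; lra.
Qed.
End Sq.

Lemma HQ_le (R : realType) (G : 'I_2 -> probability R R) (q : 'I_2 -> nat -> nat -> R)
  (p : 'I_2 -> R -> nat -> nat -> R) (i : 'I_2) (Ht t s1 s2 s1' s2' : R) :
  bellman_harris2 G q p -> 0 <= t -> 0 <= Ht ->
  0 <= s1 <= s1' -> s1' <= 1 -> 0 <= s2 <= s2' -> s2' <= 1 ->
  Ht * BH_Q p i t s1' s2' <= Ht * BH_Q p i t s1 s2.
Proof.
move=> [_ [_ [hs _]]] t0 H0 h1 h1' h2 h2'.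
apply: ler_wpM2l => //; rewrite /BH_Q lerB //.
exact: pgf2_le (hs i t t0) h1 h1' h2 h2'.
Qed.

Lemma near_ge0 (R : realType) (f : R -> R) : (forall t, 0 <= t -> 0 <= f t) ->
  \forall t \near +oo, 0 <= f t.
Proof.
move=> hf; have := @nbhs_pinfty_ge R 0 (real0 _); apply: filterS => t; exact: hf.
Qed.

Lemma exp_rng (R : realType) (l k : R) : 0 < l -> 0 <= k ->
  0 <= expR (- (l * k)) <= 1.
Proof.
move=> l0 k0; rewrite ltW ?expR_gt0 //= expR_le1 oppr_le0 mulr_ge0 // ltW.
  by []. by [].
Qed.
Theorem lemma6 (R : realType)
  (G : 'I_2 -> probability R R) (q : 'I_2 -> nat -> nat -> R)
  (p : 'I_2 -> R -> nat -> nat -> R)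
  (HBH : bellman_harris2 G q p)
  (H k1 k2 : R -> R)
  (H_ge0 : forall t : R, 0 <= t -> 0 <= H t)
  (k1_ge0 : forall t : R, 0 <= t -> 0 <= k1 t)
  (k2_ge0 : forall t : R, 0 <= t -> 0 <= k2 t)
  (k1_to0 : k1 x @[x --> +oo] --> 0)
  (k2_to0 : k2 x @[x --> +oo] --> 0)
  (H_tooo : H x @[x --> +oo] --> +oo) :
  (* (a) *)
  (forall (k1l k2l : R -> R -> R) (h : 'I_2 -> R -> R -> R),
     (forall l1 : R, 0 < l1 -> equiv_pinfty (fun t => k1l t l1) (fun t => l1 * k1 t)) ->
     (forall l2 : R, 0 < l2 -> equiv_pinfty (fun t => k2l t l2) (fun t => l2 * k2 t)) ->
     (forall (i : 'I_2) (l1 l2 : R), 0 < l1 -> 0 < l2 ->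
        H t * BH_Q p i t (1 - k1l t l1) (1 - k2l t l2) @[t --> +oo]
          --> h i l1 l2) ->
     (forall (i : 'I_2) (l1 l2 : R), 0 < l1 -> 0 < l2 ->
        (h i x l2 @[x --> l1] --> h i l1 l2) /\
        (h i l1 y @[y --> l2] --> h i l1 l2)) ->
     forall (i : 'I_2) (l1 l2 : R), 0 < l1 -> 0 < l2 ->
        H t * BH_Q p i t (expR (- (l1 * k1 t))) (expR (- (l2 * k2 t)))
          @[t --> +oo] --> h i l1 l2)
  /\
  (* (b) *)
  (forall (k2l : R -> R -> R) (h : 'I_2 -> R -> R),
     (forall l2 : R, 0 < l2 -> equiv_pinfty (fun t => k2l t l2) (fun t => l2 * k2 t)) ->
     (forall (i : 'I_2) (l2 : R), 0 < l2 ->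
        H t * BH_Q p i t 1 (1 - k2l t l2) @[t --> +oo] --> h i l2) ->
     (forall (i : 'I_2) (l2 : R), 0 < l2 -> h i y @[y --> l2] --> h i l2) ->
     forall (i : 'I_2) (l2 : R), 0 < l2 ->
        H t * BH_Q p i t 1 (expR (- (l2 * k2 t))) @[t --> +oo] --> h i l2).
Proof.
have hk1 := @near_ge0 R k1 k1_ge0. have hk2 := @near_ge0 R k2 k2_ge0.
have tpos := @nbhs_pinfty_ge R 0 (real0 _).
split.
- move=> k1l k2l h E1 E2 Hc Hcont i l1 l2 l10 l20.
  apply: squeeze => e e0.
  have e20 : 0 < e / 2 by rewrite divr_gt0.
  have [c1 _] := Hcont i l1 l2 l10 l20.
  move/cvgrPdist_le: c1 => /(_ _ e20) c1.
  have [[a1 [a1l ha1]] [b1 [/andP[b10 b1l] hb1]]] := @near_pts R _ _ l10 c1.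
  have a10 : 0 < a1 by exact: lt_trans a1l.
  have [_ c2a] := Hcont i a1 l2 a10 l20.
  move/cvgrPdist_le: c2a => /(_ _ e20) c2a.
  have [[a2 [a2l ha2]] _] := @near_pts R _ _ l20 c2a.
  have [_ c2b] := Hcont i b1 l2 b10 l20.
  move/cvgrPdist_le: c2b => /(_ _ e20) c2b.
  have [_ [b2 [/andP[b20 b2l] hb2]]] := @near_pts R _ _ l20 c2b.
  have a20 : 0 < a2 by exact: lt_trans a2l.
  exists (fun t => H t * BH_Q p i t (1 - k1l t b1) (1 - k2l t b2)),
         (fun t => H t * BH_Q p i t (1 - k1l t a1) (1 - k2l t a2)),
         (h i b1 b2), (h i a1 a2).
  split.
  + exact: Hc.
  + exact: Hc.
  + move: hb1 hb2; rewrite !ler_norml => /andP[? ?] /andP[? ?]; lra.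
  + move: ha1 ha2; rewrite !ler_norml => /andP[? ?] /andP[? ?]; lra.
  + have U1 := @upper_pt R k1 (fun t => k1l t a1) a1 l1 (introT andP (conj l10 a1l)) hk1 k1_to0 (E1 a1 a10).
    have U2 := @upper_pt R k2 (fun t => k2l t a2) a2 l2 (introT andP (conj l20 a2l)) hk2 k2_to0 (E2 a2 a20).
    have L1 := @lower_pt R k1 (fun t => k1l t b1) b1 l1 (introT andP (conj b10 b1l)) hk1 k1_to0 (E1 b1 b10).
    have L2 := @lower_pt R k2 (fun t => k2l t b2) b2 l2 (introT andP (conj b20 b2l)) hk2 k2_to0 (E2 b2 b20).
    near=> t.
    have [/andP[u1 u1'] u1''] : 0 <= 1 - k1l t a1 <= 1 /\ 1 - k1l t a1 <= expR (- (l1 * k1 t)) by near: t.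
    have [/andP[u2 u2'] u2''] : 0 <= 1 - k2l t a2 <= 1 /\ 1 - k2l t a2 <= expR (- (l2 * k2 t)) by near: t.
    have [/andP[v1 v1'] v1''] : 0 <= 1 - k1l t b1 <= 1 /\ expR (- (l1 * k1 t)) <= 1 - k1l t b1 by near: t.
    have [/andP[v2 v2'] v2''] : 0 <= 1 - k2l t b2 <= 1 /\ expR (- (l2 * k2 t)) <= 1 - k2l t b2 by near: t.
    have t0 : 0 <= t by near: t.
    have /andP[x1 x1'] := @exp_rng R _ _ l10 (k1_ge0 t t0).
    have /andP[x2 x2'] := @exp_rng R _ _ l20 (k2_ge0 t t0).
    have Ht0 := H_ge0 t t0.
    apply/andP; split; apply: (@HQ_le R G q p i (H t) t _ _ _ _ HBH) => //; apply/andP; split => //.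
- move=> k2l h E2 Hc Hcont i l2 l20.
  apply: squeeze => e e0.
  have c2 := Hcont i l2 l20.
  move/cvgrPdist_le: c2 => /(_ _ e0) c2.
  have [[a2 [a2l ha2]] [b2 [/andP[b20 b2l] hb2]]] := @near_pts R _ _ l20 c2.
  have a20 : 0 < a2 by exact: lt_trans a2l.
  exists (fun t => H t * BH_Q p i t 1 (1 - k2l t b2)),
         (fun t => H t * BH_Q p i t 1 (1 - k2l t a2)),
         (h i b2), (h i a2).
  split.
  + exact: Hc.
  + exact: Hc.
  + move: hb2; rewrite !ler_norml => /andP[? ?]; lra.
  + move: ha2; rewrite !ler_norml => /andP[? ?]; lra.
  + have U2 := @upper_pt R k2 (fun t => k2l t a2) a2 l2 (introT andP (conj l20 a2l)) hk2 k2_to0 (E2 a2 a20).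
    have L2 := @lower_pt R k2 (fun t => k2l t b2) b2 l2 (introT andP (conj b20 b2l)) hk2 k2_to0 (E2 b2 b20).
    near=> t.
    have [/andP[u2 u2'] u2''] : 0 <= 1 - k2l t a2 <= 1 /\ 1 - k2l t a2 <= expR (- (l2 * k2 t)) by near: t.
    have [/andP[v2 v2'] v2''] : 0 <= 1 - k2l t b2 <= 1 /\ expR (- (l2 * k2 t)) <= 1 - k2l t b2 by near: t.
    have t0 : 0 <= t by near: t.
    have /andP[x2 x2'] := @exp_rng R _ _ l20 (k2_ge0 t t0).
    have Ht0 := H_ge0 t t0.
    apply/andP; split; apply: (@HQ_le R G q p i (H t) t _ _ _ _ HBH) => //; apply/andP; split => //.
Unshelve. all: by end_near.
Qed.
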